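(* Let $1<p<\infty$, $\alpha>0$ and $\sigma=\frac{p}{p-1}$. There exists a constant $c_{\alpha p}>0$ such that for every measurable $f$ on $\Omega$, $$\sup_{0<t<1}t^{-1}(1-\log t)^{-\alpha/p}\int_0^{t^\sigma}f_*(s)\,ds\ \le\ c_{\alpha p}\sup_{0<t<1}(1-\log t)^{-\alpha/p}\Bigl(\int_t^1 f_*^p(s)\,ds\Bigr)^{1/p}.$$
   Context: $\Omega\subset\mathbb R^n$ is a bounded open set with $|\Omega|=1$; $f_*$ is the decreasing rearrangement of $|f|$ on $(0,1)$; $\log$ is the natural logarithm. *)

(* Defs.v *)
From HB Require Import structures.
From mathcomp Require Import all_boot all_order all_algebra.
From mathcomp Require Import all_classical all_reals all_analysis.
Set Implicit Arguments. Unset Strict Implicit. Unset Printing Implicit Defensive.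
Import Order.TTheory GRing.Theory Num.Theory.
Local Open Scope classical_set_scope.
Local Open Scope ring_scope.

Definition distrib_fun {d} {T : measurableType d} {R : realType}
  (mu : {measure set T -> \bar R}) (D : set T) (f : T -> R) (lam : R) : \bar R :=
  mu (D `&` [set x | lam < `|f x|]).

Definition decr_rearr {d} {T : measurableType d} {R : realType}
  (mu : {measure set T -> \bar R}) (D : set T) (f : T -> R) (s : R) : \bar R :=
  ereal_inf [set lam%:E | lam in
     [set lam : R | 0 <= lam /\ (distrib_fun mu D f lam <= s%:E)%E]].

(* Main.v *)
Require Import Defs.
From HB Require Import structures.
From mathcomp Require Import all_boot all_order all_algebra.
From mathcomp Require Import all_classical all_reals all_analysis.
From mathcomp Require Import ring lra zify.
From mathcomp Require Import measurable_realfun.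
Import Order.TTheory GRing.Theory Num.Theory.
Import numFieldNormedType.Exports.
Local Open Scope classical_set_scope.
Local Open Scope ring_scope.
Section ftc.
Variable R : realType.
Local Notation mu := (@lebesgue_measure R).

Lemma powR_der (c r x : R) : 0 < x ->
  is_derive x 1 (fun y => c * y `^ r) (c * (r * x `^ (r - 1))).
Proof.
move=> x0; have := is_deriveZ c (is_derive1_powR r x0).
by [].
Qed.

Lemma powR_derivable (c r x : R) : 0 < x -> derivable (fun y => c * y `^ r) x 1.
Proof. by move=> x0; have [] := @powR_der c r x x0. Qed.

Lemma powR_cont (c r x : R) : 0 < x -> {for x, continuous (fun y : R => c * y `^ r)}.
Proof.
move=> x0; apply/differentiable_continuous; rewrite -derivable1_diffP.
exact: powR_derivable.
Qed.

Lemma ftc_piece (c b e T : R) : 0 <= c -> b < 1 -> 0 < e -> e < T ->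
  (\int[mu]_(x in `[e, T]) (c * x `^ (-b))%:E <= (c * (T `^ (1-b) / (1-b)))%:E)%E.
Proof.
move=> c0 b1 e0 eT.
have b10 : 0 < 1 - b by rewrite subr_gt0.
rewrite (@continuous_FTC2 _ _ (fun y => (c / (1 - b)) * y `^ (1 - b))) //.
- rewrite -EFinD lee_fin.
  have : 0 <= c / (1 - b) * e `^ (1 - b) by apply: mulr_ge0; [exact: divr_ge0 c0 (ltW b10)|exact: powR_ge0].
  set u := c / (1 - b) * e `^ (1 - b) => hu.
  have -> : c / (1 - b) * T `^ (1 - b) = c * (T `^ (1 - b) / (1 - b)) by rewrite mulrA mulrAC.
  lra.
- apply: derivable_within_continuous => x; rewrite in_itv/= => /andP[ex _].
  by apply: powR_derivable; exact: lt_le_trans e0 ex.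
- split.
  + move=> x; rewrite in_itv/= => /andP[ex _]; apply: powR_derivable.
    exact: lt_trans e0 ex.
  + exact/cvg_at_right_filter/powR_cont.
  + apply/cvg_at_left_filter/powR_cont; exact: lt_trans e0 eT.
- move=> x; rewrite in_itv/= => /andP[ex _].
  have x0 : 0 < x := lt_trans e0 ex.
  rewrite derive1E (@derive_val _ _ _ _ _ _ _ (@powR_der (c / (1 - b)) (1 - b) x x0)).
  rewrite (_ : 1 - b - 1 = - b); last by ring.
  by field; rewrite gt_eqF.
Qed.

Lemma sub_int d (T : measurableType d)
  (mu : {measure set T -> \bar R}) (A B : set T) (f : T -> \bar R) :
  A `<=` B -> (forall x, B x -> (0 <= f x)%E) ->
  (\int[mu]_(x in A) f x <= \int[mu]_(x in B) f x)%E.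
Proof.
move=> AB f0.
rewrite !ge0_integralE//; last by move=> x /AB; exact: f0.
apply: ereal_sup_le => _ [h hf <-]; exists h => //= x.
apply: (le_trans (hf x)); rewrite /patch; case: ifPn => [/set_mem Ax|_].
  by rewrite ifT //; apply/mem_set/AB.
by case: ifPn => // /set_mem Bx; exact: f0.
Qed.

Lemma sing_int (c b T : R) : 0 <= c -> b < 1 -> 0 < T ->
  (\int[mu]_(x in `]0%R, T[) (c * x `^ (-b))%:E <= (c * (T `^ (1-b) / (1-b)))%:E)%E.
Proof.
move=> c0 b1 T0.
set h := fun x : R => (c * x `^ (-b))%:E.
pose e (n : nat) := T / n.+2%:R.
have e0 n : 0 < e n by rewrite divr_gt0.
have eT n : e n < T.
  by rewrite /e ltr_pdivrMr// ltr_pMr// ltr1n.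
have ed m n : (m <= n)%N -> e n <= e m.
  move=> mn; rewrite /e ler_pM2l// lef_pV2 ?posrE// ler_nat.
  by rewrite !ltnS.
pose g n := h \_ `[e n, T].
have mD : measurable (`]0, T[ : set R) by [].
have mh : measurable_fun [set: R] h.
  apply/measurable_EFinP; apply: measurable_funM => //.
have mg n : measurable_fun `]0, T[ (g n).
  rewrite /g; apply/measurable_restrict => //.
  exact: measurable_funS mh.
have h0 x : (0 <= h x)%E by rewrite lee_fin mulr_ge0// powR_ge0.
have g0 n (x : R) : (`]0%R, T[%classic : set R) x -> (0 <= g n x)%E.
  by move=> _; rewrite /g /patch; case: ifP.
have nd (x : R) : (`]0%R, T[%classic : set R) x -> nondecreasing_seq (g^~ x).
  move=> _ m n mn; rewrite /g /patch; case: ifPn => [/set_mem|_]; last by case: ifP.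
  rewrite /= in_itv/= => /andP[exm xT]; rewrite ifT//; apply/mem_set.
  by rewrite /= in_itv/= xT andbT (le_trans (ed _ _ mn)).
have hc := @cvg_monotone_convergence _ _ _ mu _ mD g mg g0 nd.
have -> : (\int[mu]_(x in `]0%R, T[) h x = \int[mu]_(x in `]0%R, T[) limn (g^~ x))%E.
  apply: eq_integral => x; rewrite inE /= in_itv /= => /andP[x0 xT].
  apply/esym/cvg_lim => //; apply: cvg_near_cst.
  have [N hN] : exists N : nat, T / x < N%:R.
    by exists (Num.truncn (T / x)).+1; rewrite Num.Theory.truncnS_gt.
  near=> n; rewrite /g /patch ifT//; apply/mem_set; rewrite /= in_itv /= (ltW xT) andbT.
  rewrite /e ler_pdivrMr// -ler_pdivrMl// mulrC (le_trans (ltW hN))// ler_nat.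
  near: n; exists N.+2 => // n /= Nn; lia.
rewrite -(cvg_lim _ hc)//; apply: lime_le; first by apply/cvg_ex; eexists; exact: hc.
near=> n.
rewrite -integral_mkcondr.
apply: (@le_trans _ _ (\int[mu]_(x in `[e n, T]) h x)%E).
  by apply: sub_int => [x []|x _]//; exact: h0.
exact: ftc_piece.
Unshelve. all: by end_near.
Qed.

Lemma mono_int d (T : measurableType d)
  (mu : {measure set T -> \bar R}) (D : set T) (f1 f2 : T -> \bar R) :
  (forall x, D x -> 0 <= f1 x)%E -> (forall x, D x -> f1 x <= f2 x)%E ->
  (\int[mu]_(x in D) f1 x <= \int[mu]_(x in D) f2 x)%E.
Proof.
move=> f10 f12.
have f20 : forall x, D x -> (0 <= f2 x)%E by move=> x Dx; exact: le_trans (f10 x Dx) (f12 x Dx).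
rewrite !ge0_integralE//.
apply: ereal_sup_le => _ [h hf <-]; exists h => //= x.
apply: (le_trans (hf x)); rewrite /patch; case: ifP => // /set_mem Dx.
exact: f12.
Qed.

Lemma powRV (x r : R) : 0 < x -> (x^-1) `^ r = (x `^ r)^-1.
Proof.
move=> x0; rewrite /powR invr_eq0 gt_eqF// lnV ?posrE// mulrN expRN.
by [].
Qed.

Lemma ptwise (p bet k : R) (g : R -> \bar R) : 1 < p ->
 (forall s, 0 <= g s)%E ->
 (forall s s' : R, 0 < s -> s <= s' -> (g s' <= g s)%E) ->
 (forall t, 0 < t < 1 -> (((1 - ln t) `^ (- bet))%:E *
     (\int[mu]_(s in `]t, 1%R[) (g s `^ p)) `^ p^-1 <= k%:E)%E) ->
 forall s, 0 < s < 1 ->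
   (g s <= (k * 2 `^ p^-1 * s `^ (- p^-1) * (1 - ln (s / 2)) `^ bet)%:E)%E.
Proof.
move=> p1 g0 gnd hk s /andP[s0 s1].
have p0 : 0 < p := lt_trans ltr01 p1.
set u := s / 2.
have u0 : 0 < u by rewrite divr_gt0.
have us : u < s by rewrite /u ltr_pdivrMr// ltr_pMr// ltr1n.
have u1 : u < 1 := lt_trans us s1.
have su : s - u = u by rewrite /u; field.
have hJ : (g s `^ p * (s - u)%:E <= \int[mu]_(x in `]u, 1%R[) g x `^ p)%E.
  have -> : (g s `^ p * (s - u)%:E = \int[mu]_(x in `]u, s[) (cst (g s `^ p)) x)%E.
    have hm : (mu `]u, s[%classic = (s - u)%:E)%E by rewrite lebesgue_measure_itv/= lte_fin us -EFinD.
    by rewrite integral_cst//; congr (_ * _)%E; rewrite -hm.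
  apply: (@le_trans _ _ (\int[mu]_(x in `]u, s[) g x `^ p)%E).
    apply: mono_int => [x _|x]; first exact: poweR_ge0.
    rewrite /= in_itv/= => /andP[ux xs].
    apply: gt0_ler_poweR; rewrite ?in_itv/= ?leey ?g0 ?andbT//; first exact: ltW.
    by apply: gnd; [exact: lt_trans ux|exact: ltW].
  apply: sub_int => [x|x _]; last exact: poweR_ge0.
  rewrite /= !in_itv/= => /andP[-> xs]; exact: lt_trans xs s1.
set J := (\int[mu]_(x in `]u, 1%R[) g x `^ p)%E in hJ.
have J0 : (0 <= J)%E by apply: integral_ge0 => x _; exact: poweR_ge0.
have pi0 : 0 <= p^-1 by rewrite invr_ge0 ltW.
have hJp : ((g s `^ p * (s - u)%:E) `^ p^-1 <= J `^ p^-1)%E.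
  apply: gt0_ler_poweR => //; rewrite in_itv/= leey andbT//.
  by rewrite mule_ge0// ?poweR_ge0// lee_fin subr_ge0 ltW.
rewrite poweRM ?poweR_ge0 ?lee_fin ?subr_ge0 ?(ltW us)// -poweRrM mulfV ?gt_eqF//
  poweRe1// poweR_EFin su in hJp.
have hk' := hk u ((introT andP (conj u0 u1))).
have lnu : ln u < 0 by rewrite ln_lt0// u0 u1.
have l0 : 0 < 1 - ln u by rewrite subr_gt0 (lt_trans lnu).
set w := (1 - ln u) `^ (-bet) in hk'.
have w0 : 0 < w by exact: powR_gt0.
have up0 : 0 < u `^ p^-1 by exact: powR_gt0.
have H : (g s * (u `^ p^-1 * w)%:E <= k%:E)%E.
  rewrite EFinM muleA; apply: le_trans hk'; rewrite muleC.
  by apply: lee_wpmul2l => //; rewrite lee_fin ltW.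
rewrite -lee_pdivlMr ?mulr_gt0// in H.
apply: (le_trans H); rewrite -EFinM lee_fin le_eqVlt; apply/orP; left; apply/eqP.
rewrite /w powRN /u powRM ?invr_ge0 ?ltW// powRV// powRN.
have h1 : 0 < s `^ p^-1 by exact: powR_gt0.
have h2 : 0 < 2 `^ p^-1 by exact: powR_gt0.
have h3 : 0 < (1 - ln (s / 2)) `^ bet by exact: powR_gt0.
by field; rewrite !gt_eqF.
Qed.

Lemma powRE' (x r : R) : 0 < x -> x `^ r = expR (r * ln x).
Proof. by move=> x0; rewrite /powR gt_eqF. Qed.

Lemma stepQ (p bet del s T : R) : 1 < p -> 0 < bet -> 0 < del -> 0 < s -> s <= T -> T < 1 ->
  2 `^ p^-1 * s `^ (- p^-1) * (1 - ln (s / 2)) `^ bet <=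
  (2 `^ p^-1 * (1 + ln 2) `^ bet * (del / (bet + del)) `^ (-bet)) *
  ((1 - ln T) `^ bet * T `^ del) * s `^ (-(p^-1 + del)).
Proof.
move=> p1 b0 d0 s0 sT T1.
have T0 : 0 < T := lt_le_trans s0 sT.
have L2 : 0 <= ln (2 : R) by rewrite ln_ge0// ler1n.
have lns : ln (s / 2) = ln s - ln 2 by rewrite ln_div ?posrE.
have LT : ln T < 0 by rewrite ln_lt0// T0 T1.
have Ss : ln s <= ln T by rewrite ler_ln ?posrE.
set m := del / (bet + del).
have m0 : 0 < m by rewrite divr_gt0// addr_gt0.
have m1 : m <= 1 by rewrite ler_pdivrMr ?addr_gt0// mul1r lerDr ltW.
set y := ln T - ln s.
have y0 : 0 <= y by rewrite subr_ge0.
have hy : 1 + y <= m^-1 * expR (m * y).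
  rewrite -(ler_pM2l m0) mulrA mulfV ?gt_eqF// mul1r.
  have := expR_ge1Dx (m * y); nra.
have A1 : 1 <= 1 - ln T by rewrite lerDl oppr_ge0 ltW.
have h1 : 1 - ln (s / 2) <= (1 + ln 2) * (1 - ln T) * (m^-1 * expR (m * y)).
  apply: (@le_trans _ _ ((1 + ln 2) * (1 - ln T) * (1 + y))).
    have e1 : 0 <= (- ln T) * y by rewrite mulr_ge0// oppr_ge0 ltW.
    have e2 : 0 <= ln 2 * ((1 - ln T) * (1 + y) - 1).
      rewrite mulr_ge0// subr_ge0 -[1]mulr1 ler_pM//; lra.
    rewrite lns; move: e1 e2; rewrite /y; nra.
  by rewrite ler_pM2l ?mulr_gt0// ?(lt_le_trans ltr01 A1)// ltr_pwDl.
have X0 : 0 <= 1 - ln (s / 2) by rewrite lns; lra.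
have mb : m * bet <= del.
  by rewrite /m mulrAC ler_pdivrMr ?addr_gt0// ler_pM2l//; lra.
clearbody m.
have h2 : (1 - ln (s / 2)) `^ bet <=
    (1 + ln 2) `^ bet * (1 - ln T) `^ bet * (m `^ (-bet) * expR (del * y)).
  apply: (le_trans (ge0_ler_powR (ltW b0) _ _ h1)); rewrite ?nnegrE//.
    by rewrite !mulr_ge0 ?invr_ge0 ?expR_ge0 ?ltW//; lra.
  have e3 : 0 <= 1 + ln (2:R) by lra.
  have e4 : 0 <= 1 - ln T by lra.
  have e5 : 0 <= m^-1 by rewrite invr_ge0 ltW.
  rewrite powRM ?mulr_ge0 ?expR_ge0//.
  rewrite powRM ?mulr_ge0 ?expR_ge0//.
  rewrite powRM ?mulr_ge0 ?expR_ge0//.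
  rewrite powRV// -powRN -expRM.
  apply: ler_wpM2l; first by rewrite mulr_ge0 ?powR_ge0.
  apply: ler_wpM2l; first by rewrite powR_ge0.
  rewrite ler_expR -mulrA [y * _]mulrC mulrA ler_wpM2r//.
have h4 : expR (del * y) = T `^ del * s `^ (- del).
  by rewrite !powRE' // -expRD /y; congr expR; ring.
have h5 : s `^ (- p^-1) * s `^ (-del) = s `^ (-(p^-1 + del)).
  rewrite -powRD; first by rewrite opprD.
  by rewrite (gt_eqF s0) implybT.
rewrite h4 in h2.
apply: (le_trans (ler_wpM2l _ h2)); first by rewrite mulr_ge0 ?powR_ge0.
rewrite le_eqVlt; apply/orP; left; apply/eqP.
rewrite -h5; ring.
Qed.

Lemma decr_ge0 d (T : measurableType d) (mu : {measure set T -> \bar R}) D (f : T -> R) s :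
  (0 <= decr_rearr mu D f s)%E.
Proof. by apply: le_ereal_inf_tmp => _ [lam [lam0 _] <-]; rewrite lee_fin. Qed.

Lemma decr_nd d (T : measurableType d) (mu : {measure set T -> \bar R}) D (f : T -> R) (s s' : R) :
  s <= s' -> (decr_rearr mu D f s' <= decr_rearr mu D f s)%E.
Proof.
move=> ss'; apply: ereal_inf_le_tmp => _ [lam [lam0 h] <-]; exists lam => //.
by split => //; apply: le_trans h _; rewrite lee_fin.
Qed.
End ftc.

Theorem lemma3p1 (R : realType) (p alpha : R) (hp : 1 < p) (halpha : 0 < alpha) :
  let sigma := p / (p - 1) in
  exists c : R, 0 < c /\
  forall (d : measure_display) (T : measurableType d)
         (mu : {measure set T -> \bar R}) (Omega : set T),
    measurable Omega -> mu Omega = 1%E ->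
  forall f : T -> R, measurable_fun Omega f ->
  (ereal_sup [set ((t^-1 * (1 - ln t) `^ (- (alpha / p)))%R%:E *
                   \int[lebesgue_measure]_(s in `]0%R, (t `^ sigma)%R[) decr_rearr mu Omega f s)%E
             | t in `]0%R, 1%R[]
   <= c%:E *
      ereal_sup [set (((1 - ln t) `^ (- (alpha / p)))%R%:E *
                   (\int[lebesgue_measure]_(s in `]t, 1%R[) (decr_rearr mu Omega f s `^ p))
                     `^ p^-1%R)%E
             | t in `]0%R, 1%R[])%E.
Proof.
move=> sigma.
have p0 : 0 < p := lt_trans ltr01 hp.
have p10 : 0 < p - 1 by rewrite subr_gt0.
have pi1 : p^-1 < 1 by rewrite invf_lt1.
have pi0 : 0 < p^-1 by rewrite invr_gt0.
set bet := alpha / p.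
have b0 : 0 < bet by rewrite divr_gt0.
set del := (1 - p^-1) / 2.
have d0 : 0 < del by rewrite divr_gt0// subr_gt0.
set b := p^-1 + del.
have b1 : b < 1 by rewrite /b /del; lra.
have s1 : 1 <= sigma by rewrite /sigma ler_pdivlMr// mul1r; lra.
set C0 := 2 `^ p^-1 * (1 + ln 2) `^ bet * (del / (bet + del)) `^ (-bet).
have L2 : 0 <= ln (2:R) by rewrite ln_ge0// ler1n.
have C00 : 0 < C0.
  apply: mulr_gt0; first apply: mulr_gt0; apply: powR_gt0 => //.
    lra.
  by rewrite divr_gt0// addr_gt0.
exists (C0 * sigma `^ bet / (1 - b)); split.
  apply: divr_gt0; last by rewrite subr_gt0.
  by apply: mulr_gt0 C00 _; apply: powR_gt0; lra.
move=> d T mu Omega mO muO f mf.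
set g := decr_rearr mu Omega f.
match goal with |- context [((_ : R)%:E * ?X)%E] => set K := X end.
have hm : 0 < (2^-1 : R) < 1.
  by apply/andP; split; [rewrite invr_gt0|rewrite invf_lt1// ltr1n].
have K0 : (0 <= K)%E.
  apply: le_trans (ereal_sup_ubound _); last first.
    by exists 2^-1 => //; rewrite /= in_itv/=.
  by rewrite mule_ge0 ?poweR_ge0// lee_fin powR_ge0.
have cpos : 0 < C0 * sigma `^ bet / (1 - b).
  apply: divr_gt0; last by rewrite subr_gt0.
  by apply: mulr_gt0 C00 _; apply: powR_gt0; lra.
have [Ky|Kny] := eqVneq K +oo%E.
  by rewrite Ky gt0_muley ?leey// lte_fin.
have Kfin : K \is a fin_num by rewrite ge0_fin_numE// ltey.
set k := fine K.
have Kk : K = k%:E by rewrite fineK.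
have k0 : 0 <= k by rewrite -lee_fin -Kk.
have hk : forall t, 0 < t < 1 -> (((1 - ln t) `^ (- bet))%:E *
     (\int[lebesgue_measure]_(s in `]t, 1%R[) (g s `^ p)) `^ p^-1 <= k%:E)%E.
  move=> t ht; rewrite -Kk; apply: ereal_sup_ubound; exists t => //.
have gb := @ptwise R p bet k g hp (fun s => @decr_ge0 R _ _ mu Omega f s)
  (fun s s' _ ss' => @decr_nd R _ _ mu Omega f s s' ss') hk.
have eqle (x y : R) : x = y -> x <= y by move->.
apply: ge_ereal_sup => _ [t /= ht <-].
move: ht; rewrite in_itv/= => /andP[t0 t1].
have lnt : ln t < 0 by rewrite ln_lt0// t0 t1.
have sig0 : 0 < sigma by lra.
set Tt := t `^ sigma.
have T0 : 0 < Tt by exact: powR_gt0.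
have lnT : ln Tt = sigma * ln t by rewrite ln_powR.
have T1 : Tt < 1.
  by rewrite /Tt powRE'// -expR0 ltr_expR pmulr_rlt0.
have hint : (\int[lebesgue_measure]_(s in `]0%R, Tt[) g s <=
   ((k * C0 * ((1 - ln Tt) `^ bet * Tt `^ del)) * (Tt `^ (1 - b) / (1 - b)))%:E)%E.
  apply: (le_trans _ (@sing_int R _ b Tt _ b1 T0)); last first.
    by rewrite !mulr_ge0 ?powR_ge0// ltW.
  apply: mono_int => s; first by move=> _; exact: (@decr_ge0 R _ _ mu Omega f s).
  rewrite /= in_itv/= => /andP[s0 sT].
  apply: (le_trans (gb s _)); first by rewrite s0 (lt_trans sT T1).
  rewrite lee_fin.
  have H := ler_wpM2l k0 (@stepQ R p bet del s Tt hp b0 d0 s0 (ltW sT) T1).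
  by move: H; rewrite /C0 /b !mulrA.
apply: (@le_trans _ _ ((t^-1 * (1 - ln t) `^ (- bet))%:E *
  ((k * C0 * ((1 - ln Tt) `^ bet * Tt `^ del)) * (Tt `^ (1 - b) / (1 - b)))%:E)%E).
  apply: lee_wpmul2l => //; rewrite lee_fin mulr_ge0 ?powR_ge0//.
  by rewrite invr_ge0 (ltW t0).
rewrite Kk -!EFinM lee_fin.
have A0 : 0 < 1 - ln t by rewrite subr_gt0 (lt_trans lnt).
have e1 : del + (1 - b) = 1 - p^-1 by rewrite /b; ring.
have e2 : sigma * (1 - p^-1) = 1.
  by rewrite /sigma; field; rewrite ?gt_eqF.
have Td0 : 0 < Tt `^ del by exact: powR_gt0.
have eT0 : Tt `^ del * Tt `^ (1 - b) = t.
  rewrite -powRD; last by rewrite (gt_eqF T0) implybT.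
  by rewrite e1 /Tt -powRrM e2 powRr1// ltW.
have eT : Tt `^ (1 - b) = t / Tt `^ del.
  by rewrite -eT0 mulrAC mulfV ?mul1r// gt_eqF.
have eL : (1 - ln Tt) `^ bet <= sigma `^ bet * (1 - ln t) `^ bet.
  rewrite -powRM ?(ltW sig0) ?(ltW A0)//.
  apply: ge0_ler_powR; rewrite ?nnegrE ?(ltW b0)//.
  - by rewrite lnT; nra.
  - by rewrite mulr_ge0 ?(ltW sig0) ?(ltW A0).
  - by rewrite lnT mulrBr mulr1; nra.
have eI : (1 - ln t) `^ (-bet) * (1 - ln t) `^ bet = 1.
  by rewrite powRN mulVf// gt_eqF// powR_gt0.
have b10 : 0 < 1 - b by rewrite subr_gt0.
rewrite eT.
apply: (@le_trans _ _ (k * C0 / (1-b) * (1-ln t)`^(-bet) * (sigma `^ bet * (1 - ln t) `^ bet))).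
  apply: (le_trans (eqle _ (k * C0 / (1-b) * (1-ln t)`^(-bet) * (1 - ln Tt) `^ bet) _)).
    by field; rewrite !gt_eqF.
  by apply: ler_wpM2l => //; rewrite !mulr_ge0 ?powR_ge0 ?invr_ge0 ?(ltW C00) ?(ltW b10).
apply: eqle.
transitivity (k * C0 / (1-b) * sigma `^ bet * ((1 - ln t) `^ (-bet) * (1 - ln t) `^ bet)).
  by ring.
by rewrite eI; ring.
Qed.
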